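(* Let $G=\mathrm{Aut}(\mathbf{K})$ for a Fraïssé structure $\mathbf{K}$ with exhaustion $\bigcup_n\mathbf{A}_n$, and let $M\subseteq S(G)$ be a minimal subflow. Suppose $\alpha,\gamma\in S(G)$ are such that $\phi(\alpha)=\phi(\gamma)$ for every retraction $\phi:S(G)\to M$, and let $S\subseteq H_m$ be minimal. Then $S\in\alpha(m)$ if and only if $S\in\gamma(m)$.
   Context: $\mathbf{K}$ is a countably infinite ultrahomogeneous relational structure; $\mathbf{A}_1\subseteq\mathbf{A}_2\subseteq\cdots$ finite substructures, $|\mathbf{A}_n|=n$, union $\mathbf{K}$; $H_n=\mathrm{Emb}(\mathbf{A}_n,\mathbf{K})$. $S(G)$ is the inverse limit of the spaces $\beta H_n$ of ultrafilters along the continuous extensions of restriction maps $H_n\to H_m$; $\alpha(n)$ is the $n$-th coordinate. Right $G$-action: for $S\subseteq H_m$, $S\in(\alpha g)(m)$ iff $\{x\in H_n:x\circ g|_{\mathbf{A}_m}\in S\}\in\alpha(n)$ for $n$ with $g(\mathbf{A}_m)\subseteq\mathbf{A}_n$; for $f\in H_m$ set $\alpha\cdot f=(\alpha g)(m)$ for any $g\in G$ extending $f$. Semigroup product: $S\in(\alpha\gamma)(m)$ iff $\{f\in H_m:S\in\alpha\cdot f\}\in\gamma(m)$. A minimal subflow is a nonempty closed $G$-invariant set with no proper such subset; a retraction onto $M$ is a continuous $G$-equivariant $\phi:S(G)\to M$ with $\phi|_M=\mathrm{id}$. Identify subsets of $H_m$ with $2^{H_m}$, with right action $(\chi\cdot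 g)(f)=\chi(g\circ f)$; $S\subseteq H_m$ is minimal if $\overline{\chi_S\cdot G}$ is a minimal $G$-flow. *)

(* Defs.v *)
From mathcomp Require Import all_boot.
From Stdlib Require List.

Set Implicit Arguments.
Unset Strict Implicit.
Unset Printing Implicit Defensive.

Definition pset (T : Type) := T -> Prop.

Record Struct := {
  Lang : Type;
  ar : Lang -> nat;
  Rel : forall r : Lang, ('I_(ar r) -> nat) -> Prop
}.

Section Defs.
Variable K : Struct.

Definition is_aut (g : nat -> nat) : Prop :=
  bijective g /\
  forall (r : Lang K) (t : 'I_(ar r) -> nat), Rel t <-> Rel (fun i => g (t i)).

Definition ultrahomogeneous : Prop :=
  forall (k : nat) (a b : 'I_k -> nat),
    injective a -> injective b ->
    (forall (r : Lang K) (t : 'I_(ar r) -> 'I_k),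
        Rel (fun i => a (t i)) <-> Rel (fun i => b (t i))) ->
    exists g, is_aut g /\ forall i, g (a i) = b i.

(** The exhaustion: A_n is the substructure on {0,...,n-1}.
    Embeddings A_n -> K. *)
Definition is_emb (n : nat) (f : 'I_n -> nat) : Prop :=
  injective f /\
  forall (r : Lang K) (t : 'I_(ar r) -> 'I_n),
    Rel (fun i => nat_of_ord (t i)) <-> Rel (fun i => f (t i)).

Definition H (n : nat) := {f : 'I_n -> nat | is_emb f}.

(** [agree y x k]: y = x o k (on A_m), where k maps A_m into A_n *)
Definition agree (m n : nat) (y : H m) (x : H n) (k : 'I_m -> nat) : Prop :=
  forall (i : 'I_m) (j : 'I_n), nat_of_ord j = k i -> proj1_sig y i = proj1_sig x j.

Definition ultrafilter (T : Type) (U : pset (pset T)) : Prop :=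
  U (fun _ => True) /\ ~ U (fun _ => False) /\
  (forall A B : pset T, U A -> (forall x, A x -> B x) -> U B) /\
  (forall A B : pset T, U A -> U B -> U (fun x => A x /\ B x)) /\
  (forall A : pset T, U A \/ U (fun x => ~ A x)).

(** points of S(G) are families of ultrafilters alpha(n) on H_n *)
Definition Pt := forall n : nat, pset (pset (H n)).

(** preimage of S subset H_m under restriction H_n -> H_m *)
Definition restr_pre (m n : nat) (S : pset (H m)) : pset (H n) :=
  fun x => exists y, S y /\ agree y x (fun i => nat_of_ord i).

(** S(G) : the inverse limit of the beta H_n *)
Definition in_SG (a : Pt) : Prop :=
  (forall n, ultrafilter (a n)) /\
  (forall m n, m <= n -> forall S : pset (H m), a m S <-> a n (@restr_pre m n S)).

(** right action of G on S(G) *)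
Definition act (a : Pt) (g : nat -> nat) : Pt :=
  fun m S => exists n, (forall i : 'I_m, g i < n) /\
    a n (fun x : H n => exists y, S y /\ agree y x (fun i => g i)).

(** topology of S(G): basic clopen sets {b | T in b(m)} *)
Definition continuous_SG (phi : Pt -> Pt) : Prop :=
  forall a, in_SG a -> forall m (S : pset (H m)), phi a m S ->
    exists m' (T : pset (H m')), a m' T /\
      forall b, in_SG b -> b m' T -> phi b m S.

Definition closed_SG (C : pset Pt) : Prop :=
  forall a, in_SG a -> ~ C a ->
    exists m (T : pset (H m)), a m T /\ forall b, in_SG b -> b m T -> ~ C b.

Definition invariant_SG (C : pset Pt) : Prop :=
  forall a g, C a -> is_aut g -> C (act a g).

Definition minimal_subflow (M : pset Pt) : Prop :=
  (forall a, M a -> in_SG a) /\ (exists a, M a) /\ closed_SG M /\ invariant_SG M /\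
  (forall N : pset Pt, (forall a, N a -> M a) -> (exists a, N a) ->
      closed_SG N -> invariant_SG N -> forall a, M a -> N a).

Definition retraction (M : pset Pt) (phi : Pt -> Pt) : Prop :=
  (forall a, in_SG a -> M (phi a)) /\
  continuous_SG phi /\
  (forall a g, in_SG a -> is_aut g -> phi (act a g) = act (phi a) g) /\
  (forall a, M a -> phi a = a).

(** the flow 2^{H_m}: points are subsets of H_m, (T.g)(f) = T(g o f) *)
Definition actS (m : nat) (T : pset (H m)) (g : nat -> nat) : pset (H m) :=
  fun f => exists h, T h /\ forall i, proj1_sig h i = g (proj1_sig f i).

(** closure in the product topology of 2^{H_m} *)
Definition in_closure (m : nat) (A : pset (pset (H m))) (T : pset (H m)) : Prop :=
  forall F : list (H m), exists U, A U /\ forall f, List.In f F -> (T f <-> U f).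

Definition closed2 (m : nat) (A : pset (pset (H m))) : Prop :=
  forall T, in_closure A T -> A T.

Definition invariant2 (m : nat) (A : pset (pset (H m))) : Prop :=
  forall T g, A T -> is_aut g -> A (actS T g).

Definition minimal_flow2 (m : nat) (X : pset (pset (H m))) : Prop :=
  (exists T, X T) /\ closed2 X /\ invariant2 X /\
  (forall Y : pset (pset (H m)), (forall T, Y T -> X T) -> (exists T, Y T) ->
      closed2 Y -> invariant2 Y -> forall T, X T -> Y T).

Definition orbit_closure (m : nat) (S : pset (H m)) : pset (pset (H m)) :=
  in_closure (fun U => exists g, is_aut g /\ U = actS S g).

Definition minimal_set (m : nat) (S : pset (H m)) : Prop :=
  minimal_flow2 (orbit_closure S).

End Defs.

(* Main.v *)
Require Import Defs.
From mathcomp Require Import all_boot.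
From mathcomp Require Import boolp classical_sets filter.
Set Implicit Arguments. Unset Strict Implicit.

Section Gen.
Local Open Scope classical_set_scope.
Lemma ultra_ext (T : Type) (B : pset (pset T)) :
  (forall A1 A2, B A1 -> B A2 -> exists A3, B A3 /\ forall x, A3 x -> A1 x /\ A2 x) ->
  (forall A, B A -> exists x, A x) -> (exists A, B A) ->
  exists U, ultrafilter U /\ forall A, B A -> U A.
Proof.
move=> BI Bne [A0 BA0].
have FF : Filter (filter_from B id).
  apply: filter_from_filter; first by exists A0.
  move=> i j Bi Bj; have [k [Bk Hk]] := BI _ _ Bi Bj; exists k => // x /Hk.
have PF : ProperFilter (filter_from B id).
  apply: filter_from_proper => i /Bne [x ?]; by exists x.
have [G [GU sFG]] := ultraFilterLemma PF.
exists G; split; last first.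
  by move=> A BA; apply: sFG; exists A.
have GP : ProperFilter G by exact: ultra_proper.
split; first exact: filterT.
split; first exact: (filter_not_empty G).
split; first by move=> A A' GA sub; apply: (filterS _ GA); move=> x /sub.
split; first by move=> A A' GA GA'; have := @filterI _ G _ A A' GA GA'; exact.
by move=> A; have [h|h] := in_ultra_setVsetC A GU; [left|right].
Qed.

Lemma zorn_min (T : Type) (P : pset (pset T)) :
  (forall F : pset (pset T), (forall Z, F Z -> P Z) ->
     (forall Z1 Z2, F Z1 -> F Z2 -> (forall x, Z1 x -> Z2 x) \/ (forall x, Z2 x -> Z1 x)) ->
     P (fun x => forall Z, F Z -> Z x)) ->
  exists Z, P Z /\ forall Z', P Z' -> (forall x, Z' x -> Z x) -> forall x, Z x -> Z' x.
Proof.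
move=> HP.
have [A [PA Amax]] : exists A, P (~` A) /\ forall B, A `<` B -> ~ P (~` B).
  apply: (@Zorn_bigcup T (fun A => P (~` A))).
  move=> F FP tot.
  have := HP (fun Z => F (~` Z)).
  have E : (fun x => forall Z, F (~` Z) -> Z x) = ~` (\bigcup_(X in F) X).
    rewrite predeqE => x; split.
      by move=> h [X FX Xx]; have := h (~` X); rewrite setCK => /(_ FX).
    move=> h Z FZ; apply/not_notP => nZ; apply: h; by exists (~` Z).
  rewrite E; apply.
    by move=> Z FZ; have := FP _ FZ; rewrite setCK.
  move=> Z1 Z2 F1 F2; have [h|h] := tot _ _ F1 F2.
    by right => x Z2x; apply/not_notP => nZ1; apply: (h x nZ1).
  by left => x Z1x; apply/not_notP => nZ2; apply: (h x nZ2).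
exists (~` A); split => // Z' PZ' sub x Ax.
apply/not_notP => nZ'x.
apply: (Amax (~` Z')); last by rewrite setCK.
split; first by move=> y Ay Z'y; exact: (sub y Z'y Ay).
by move=> h; exact: (Ax (h x nZ'x)).
Qed.
End Gen.


Section S1.
Variable K : Struct.

Lemma eqH n (x y : H K n) : (forall i, sval x i = sval y i) -> x = y.
Proof.
case: x => x px; case: y => y py /= h.
have E : x = y by apply: funext.
subst; congr exist; exact: Prop_irrelevance.
Qed.

Lemma idH_emb n : is_emb K (fun i : 'I_n => nat_of_ord i).
Proof. split; [exact: val_inj | by []]. Qed.
Definition idH n : H K n := exist _ _ (@idH_emb n).

Lemma compH_emb m n (x : H K n) (f : H K m) (hb : forall i, sval f i < n) :
  is_emb K (fun i => sval x (Ordinal (hb i))).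
Proof.
case: x hb => x [xi xr]; case: f => f [fi fr] /= hb; split.
  by move=> i j /xi [] /fi.
move=> r t; rewrite (fr r t).
have := xr r (fun k => Ordinal (hb (t k))); by [].
Qed.
Definition compH m n (x : H K n) (f : H K m) hb : H K m := exist _ _ (@compH_emb m n x f hb).
Arguments compH {m n} x f hb.

Lemma autH_emb g (hg : is_aut K g) m : is_emb K (fun i : 'I_m => g i).
Proof.
case: hg => [[g' gK _] hr]; split.
  move=> i j /(congr1 g'); rewrite !gK; exact: val_inj.
move=> r t; exact: (hr r (fun k => nat_of_ord (t k))).
Qed.
Definition autH g (hg : is_aut K g) m : H K m := exist _ _ (autH_emb hg m).

Lemma bound m (k : 'I_m -> nat) : exists n, forall i, k i < n.
Proof.
exists (\max_(i < m) k i).+1 => i; rewrite ltnS; exact: (leq_bigmax_cond i).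
Qed.

Lemma bound_list m (F : list (H K m)) : exists n, forall f, List.In f F -> forall i, sval f i < n.
Proof.
elim: F => [|f F [n hn]]; first by exists 0.
have [n' hn'] := bound (sval f).
exists (maxn n n') => f' [<-|/hn h] i.
  by apply: (leq_trans (hn' i)); exact: leq_maxr.
by apply: (leq_trans (h i)); exact: leq_maxl.
Qed.

Definition ultrahom := ultrahomogeneous K.

Lemma extend (hK : ultrahomogeneous K) m (f : H K m) :
  exists g (hg : is_aut K g), autH hg m = f.
Proof.
case: f => f [fi fr].
have [g [hg hgf]] := hK m (fun i => nat_of_ord i) f val_inj fi (fun r t => fr r t).
exists g, hg; apply: eqH => i /=; exact: hgf.
Qed.

Section UF.
Variables (T : Type) (U : pset (pset T)) (hU : ultrafilter U).
Lemma uf_T : U (fun _ => True). Proof. by case: hU. Qed.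
Lemma uf_F : ~ U (fun _ => False). Proof. by case: hU => _ []. Qed.
Lemma uf_mono A B : U A -> (forall x, A x -> B x) -> U B.
Proof. by case: hU => _ [_ [h _]]; exact: h. Qed.
Lemma uf_and A B : U A -> U B -> U (fun x => A x /\ B x).
Proof. by case: hU => _ [_ [_ [h _]]]; exact: h. Qed.
Lemma uf_em A : U A \/ U (fun x => ~ A x).
Proof. by case: hU => _ [_ [_ [_ h]]]; exact: h. Qed.
Lemma uf_ext A B : (forall x, A x <-> B x) -> (U A <-> U B).
Proof. by move=> h; split=> hA; apply: (uf_mono hA) => x /h. Qed.
Lemma uf_ne A : U A -> exists x, A x.
Proof.
move=> hA; case: (pselect (exists x, A x)) => // nA.
exfalso; apply: uf_F; apply: (uf_mono hA) => x Ax; apply: nA; by exists x.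
Qed.
Lemma uf_not A : U (fun x => ~ A x) <-> ~ U A.
Proof.
split.
  move=> h1 h2; apply: uf_F; apply: (uf_mono (uf_and h1 h2)) => x [] //.
by move=> h; case: (uf_em A).
Qed.
End UF.


Definition pre m n (k : 'I_m -> nat) (T : pset (H K m)) : pset (H K n) :=
  fun x => exists y, T y /\ agree y x k.
Arguments pre {m} n k T _.
Definition dot (a : Pt K) m (k : 'I_m -> nat) (T : pset (H K m)) : Prop :=
  exists n, (forall i, k i < n) /\ a n (pre n k T).

Lemma pre_char m n (f : H K m) (hb : forall i, sval f i < n) T x :
  pre n (sval f) T x <-> T (compH x f hb).
Proof.
split.
  case=> y [Ty ag].
  have -> : compH x f hb = y => //.
  apply: eqH => i /=; symmetry; exact: (ag i (Ordinal (hb i))).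
move=> h; exists (compH x f hb); split => // i j /= E.
by congr (sval x _); apply: val_inj.
Qed.

Lemma compH_comp m n p (x : H K p) (g : H K n) (f : H K m) hg hf hgf :
  compH (compH x g hg) f hf = compH x (compH g f hf) hgf.
Proof. apply: eqH => i /=; congr (sval x _); exact: val_inj. Qed.

Lemma compH_irr m n (x : H K n) (f f' : H K m) hf hf' :
  f = f' -> compH x f hf = compH x f' hf'.
Proof. move=> E; subst; apply: eqH => i /=; congr (sval x _); exact: val_inj. Qed.

Lemma bid m n (hmn : m <= n) : forall i, sval (idH m) i < n.
Proof. move=> i /=; exact: (leq_trans (ltn_ord i) hmn). Qed.

Lemma pre_restr m n1 n2 (h12 : n1 <= n2) (f : H K m) (hb : forall i, sval f i < n1) T x :
  restr_pre (pre n1 (sval f) T) x <-> pre n2 (sval f) T x.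
Proof.
have hb2 : forall i, sval f i < n2 by move=> i; exact: (leq_trans (hb i)).
change (pre n2 (sval (idH n1)) (pre n1 (sval f) T) x <-> pre n2 (sval f) T x).
rewrite (pre_char (bid h12)) !(pre_char hb) (pre_char hb2).
have hh : forall i, sval (compH (idH n1) f hb) i < n2.
  by move=> i; exact: bid.
rewrite (compH_comp _ _ hh).
by rewrite (@compH_irr _ _ x _ f _ hb2) //; apply: eqH.
Qed.

Lemma coh (a : Pt K) m n (ha : in_SG a) (hmn : m <= n) T : a m T <-> a n (restr_pre T).
Proof. by case: ha => _ h; exact: h. Qed.

Lemma ufa (a : Pt K) n (ha : in_SG a) : ultrafilter (a n).
Proof. by case: ha. Qed.

Lemma dot_at (a : Pt K) m n (ha : in_SG a) (f : H K m) (hb : forall i, sval f i < n) T :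
  dot a (sval f) T <-> a n (pre n (sval f) T).
Proof.
split; last by move=> h; exists n.
case=> n' [hb' h'].
pose N := maxn n n'.
have := proj1 (coh ha (leq_maxr n n') _) h'.
rewrite (uf_ext (ufa N ha) (B := pre N (sval f) T)); last first.
  by move=> x; exact: (pre_restr (leq_maxr n n') hb').
rewrite -(uf_ext (ufa N ha) (A := restr_pre (pre n (sval f) T))); last first.
  by move=> x; exact: (pre_restr (leq_maxl n n') hb).
by rewrite -coh //; exact: leq_maxl.
Qed.

Lemma dot_id (a : Pt K) m (ha : in_SG a) T : dot a (sval (idH m)) T <-> a m T.
Proof.
rewrite (dot_at ha (n := m)); last by move=> i; exact: ltn_ord.
symmetry; exact: (coh ha (leqnn m) T).
Qed.

Lemma uf_push T1 T2 (U : pset (pset T1)) (phi : T1 -> T2) :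
  ultrafilter U -> ultrafilter (fun A : pset T2 => U (fun x => A (phi x))).
Proof.
move=> hU; split; first exact: uf_T.
split; first exact: uf_F.
split; first by move=> A B hA sub; apply: (uf_mono hU hA) => x /sub.
split; first by move=> A B hA hB; exact: (uf_and hU hA hB).
by move=> A; exact: (uf_em hU).
Qed.

Lemma uf_eqv T (U V : pset (pset T)) : ultrafilter U -> (forall A, U A <-> V A) -> ultrafilter V.
Proof.
move=> hU E.
have -> : V = U by apply: funext => A; apply: propext; split => /E.
exact: hU.
Qed.

Lemma dot_uf (a : Pt K) m (ha : in_SG a) (f : H K m) : ultrafilter (fun T => dot a (sval f) T).
Proof.
have [n hb] := bound (sval f).
apply: (uf_eqv (uf_push (fun x => compH x f hb) (ufa n ha))) => A.
rewrite (dot_at ha hb); symmetry; apply: (uf_ext (ufa n ha)) => x.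
exact: pre_char.
Qed.

Lemma dot_comp (a : Pt K) m n (ha : in_SG a) (x : H K n) (f : H K m) (hb : forall i, sval f i < n) T :
  dot a (sval x) (pre n (sval f) T) <-> dot a (sval (compH x f hb)) T.
Proof.
have [N hN] := bound (sval x).
have hN' : forall i, sval (compH x f hb) i < N by move=> i; exact: hN.
rewrite (dot_at ha hN) (dot_at ha hN').
apply: (uf_ext (ufa N ha)) => z.
rewrite (pre_char hN) (pre_char hb) (pre_char hN').
by rewrite (compH_comp _ _ hN').
Qed.

Lemma dot_k (a : Pt K) m (k1 k2 : 'I_m -> nat) T : (forall i, k1 i = k2 i) -> (dot a k1 T <-> dot a k2 T).
Proof. by move=> h; rewrite (funext h). Qed.


Definition prod (a c : Pt K) : Pt K := fun m T => c m (fun f : H K m => dot a (sval f) T).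

Lemma pt_eq (a b : Pt K) : (forall m T, a m T <-> b m T) -> a = b.
Proof.
move=> h; apply: functional_extensionality_dep => m.
apply: funext => T; apply: propext; exact: h.
Qed.

Lemma restr_char m n (hmn : m <= n) (T : pset (H K m)) (x : H K n) :
  restr_pre T x <-> T (compH x (idH m) (bid hmn)).
Proof. exact: (pre_char (bid hmn) T x). Qed.

Lemma uf_comp X Y (U : pset (pset X)) (V : X -> pset (pset Y)) :
  ultrafilter U -> (forall x, ultrafilter (V x)) ->
  ultrafilter (fun B => U (fun x => V x B)).
Proof.
move=> hU hV; split.
  by apply: (uf_mono hU (uf_T hU)) => x _; exact: uf_T.
split.
  move=> h; have [x hx] := uf_ne hU h; exact: (uf_F (hV x) hx).
split.
  by move=> A B hA sub; apply: (uf_mono hU hA) => x hx; apply: (uf_mono (hV x) hx).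
split.
  by move=> A B hA hB; apply: (uf_mono hU (uf_and hU hA hB)) => x [h1 h2]; exact: uf_and.
move=> A; case: (uf_em hU (fun x => V x A)) => h; [left => // | right].
apply: (uf_mono hU h) => x hx; by apply/(uf_not (hV x)).
Qed.

Lemma prod_SG (a c : Pt K) : in_SG a -> in_SG c -> in_SG (prod a c).
Proof.
move=> ha hc; split.
  move=> m; apply: (uf_comp (ufa m hc)) => f; exact: dot_uf.
move=> m n hmn T; rewrite /prod (coh hc hmn).
apply: (uf_ext (ufa n hc)) => x; rewrite (restr_char hmn).
symmetry; exact: (dot_comp ha x (bid hmn) T).
Qed.

Lemma dot_prod (a c : Pt K) m (ha : in_SG a) (hc : in_SG c) (f : H K m) T :
  dot (prod a c) (sval f) T <-> dot c (sval f) (fun h => dot a (sval h) T).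
Proof.
have [n hb] := bound (sval f).
rewrite (dot_at (prod_SG ha hc) hb) (dot_at hc hb) /prod.
apply: (uf_ext (ufa n hc)) => x; rewrite (pre_char hb).
exact: dot_comp.
Qed.

Lemma prod_assoc (a b c : Pt K) : in_SG a -> in_SG b -> in_SG c ->
  prod (prod a b) c = prod a (prod b c).
Proof.
move=> ha hb hc; apply: pt_eq => m T; rewrite /prod.
apply: (uf_ext (ufa m hc)) => f; exact: dot_prod.
Qed.

Lemma act_dot (a : Pt K) g (hg : is_aut K g) m T : act a g T <-> dot a (sval (autH hg m)) T.
Proof. by split. Qed.

Lemma act_SG (a : Pt K) g (hg : is_aut K g) : in_SG a -> in_SG (act a g).
Proof.
move=> ha; split.
  move=> m; apply: (uf_eqv (dot_uf ha (autH hg m))) => A; by split.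
move=> m n hmn T.
change (dot a (sval (autH hg m)) T <-> dot a (sval (autH hg n)) (pre n (sval (idH m)) T)).
rewrite (dot_comp ha (autH hg n) (bid hmn) T); exact: dot_k.
Qed.

Lemma dot_act (a : Pt K) g (hg : is_aut K g) m (ha : in_SG a) (f : H K m) T :
  dot (act a g) (sval f) T <-> dot a (fun i => g (sval f i)) T.
Proof.
have [n hb] := bound (sval f).
rewrite (dot_at (act_SG hg ha) hb) (act_dot _ hg) (dot_comp ha _ hb).
by apply: dot_k.
Qed.

Lemma prod_act (a c : Pt K) g (hg : is_aut K g) : in_SG a -> in_SG c ->
  act (prod a c) g = prod a (act c g).
Proof.
move=> ha hc; apply: pt_eq => m T.
rewrite (act_dot _ hg) (dot_prod ha hc) /prod (act_dot _ hg); by [].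
Qed.


Lemma closed_ext (C C' : pset (Pt K)) : closed_SG C -> (forall b, in_SG b -> (C b <-> C' b)) -> closed_SG C'.
Proof.
move=> hC E a ha na.
have [m [T [aT h]]] := hC a ha (fun c => na (proj1 (E a ha) c)).
exists m, T; split => // b hb bT /(E b hb); exact: h.
Qed.

Lemma closed_iff m (P : pset (H K m)) (Q : Prop) : closed_SG (fun b : Pt K => b m P <-> Q).
Proof.
move=> a ha na.
case: (pselect (a m P)) => aP.
  have nQ : ~ Q by move=> q; apply: na; split.
  exists m, P; split => // b hb bP [h _]; exact: nQ (h bP).
have q : Q by case: (pselect Q) => // nq; exfalso; apply: na; split.
exists m, (fun x => ~ P x); split; first by apply/(uf_not (ufa m ha)).
move=> b hb bP [_ h]; exact: (proj1 (uf_not (ufa m hb) P) bP (h q)).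
Qed.
Arguments closed_iff {m} P Q [a] _ _.


Lemma closed_at m (P : pset (H K m)) : closed_SG (fun b : Pt K => b m P).
Proof.
refine (closed_ext (closed_iff P True) _) => b _.
split; [by case=> _ h; exact: h | by move=> h; split].
Qed.
Arguments closed_at {m} P [a] _ _.


Lemma closed_all I (C : I -> pset (Pt K)) : (forall i, closed_SG (C i)) -> closed_SG (fun b => forall i, C i b).
Proof.
move=> hC a ha na.
have [i ni] : exists i, ~ C i a.
  by apply/existsNP.
have [m [T [aT h]]] := hC i a ha ni.
exists m, T; split => // b hb bT hall; exact: h b hb bT (hall i).
Qed.
Arguments closed_all {I} C _ [a] _ _.


Lemma closed_and (C1 C2 : pset (Pt K)) : closed_SG C1 -> closed_SG C2 -> closed_SG (fun b => C1 b /\ C2 b).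
Proof.
move=> h1 h2.
apply: (closed_ext (closed_all (fun (i : bool) => if i then C1 else C2) _)).
  by case.
move=> b _; split; first by move=> h; split; [exact: (h true) | exact: (h false)].
by case=> ? ? [].
Qed.
Arguments closed_and {C1 C2} _ _ [a] _ _.


Lemma closed_imp (Q : Prop) (C : pset (Pt K)) : closed_SG C -> closed_SG (fun b => Q -> C b).
Proof.
move=> hC; apply: (closed_ext (closed_all (fun (_ : Q) => C) (fun _ => hC))).
by move=> b _; split.
Qed.
Arguments closed_imp Q {C} _ [a] _ _.


Lemma closed_dot m (f : H K m) T (Q : Prop) : closed_SG (fun b : Pt K => dot b (sval f) T <-> Q).
Proof.
have [n hb] := bound (sval f).
apply: (closed_ext (closed_iff (pre n (sval f) T) Q)) => b bS.
by rewrite (dot_at bS hb).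
Qed.
Arguments closed_dot {m} f T Q [a] _ _.


Definition Gt := {g : nat -> nat | is_aut K g}.
Definition autG (g : Gt) m : H K m := autH (proj2_sig g) m.

Lemma autG_restr (g : Gt) m n (hmn : m <= n) : compH (autG g n) (idH m) (bid hmn) = autG g m.
Proof. by apply: eqH. Qed.

Lemma compact (hK : ultrahomogeneous K) (CC : pset (pset (Pt K))) :
  (forall C, CC C -> closed_SG C) -> (forall C, CC C -> exists b, in_SG b /\ C b) ->
  (forall C1 C2, CC C1 -> CC C2 -> exists C3, CC C3 /\ forall b, in_SG b -> C3 b -> C1 b /\ C2 b) ->
  (exists C, CC C) ->
  exists a, in_SG a /\ forall C, CC C -> C a.
Proof.
move=> Ccl Cne Cdir [C0 CC0].
pose B := fun A : pset Gt => exists m (T : pset (H K m)) C, CC C /\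
   (forall b, in_SG b -> C b -> b m T) /\ forall g, T (autG g m) -> A g.
have [U [hU UB]] : exists U, ultrafilter U /\ forall A, B A -> U A.
  apply: ultra_ext.
  - move=> A1 A2 [m1 [T1 [C1 [CC1 [imp1 s1]]]]] [m2 [T2 [C2 [CC2 [imp2 s2]]]]].
    have [C3 [CC3 s3]] := Cdir _ _ CC1 CC2.
    have h1 : m1 <= m1 + m2 by exact: leq_addr.
    have h2 : m2 <= m1 + m2 by exact: leq_addl.
    pose T3 := fun x : H K (m1 + m2) => restr_pre T1 x /\ restr_pre T2 x.
    exists (fun g => T3 (autG g (m1 + m2))); split.
      exists (m1 + m2), T3, C3; split => //; split => // b hb bC3.
      have [c1 c2] := s3 b hb bC3.
      apply: (uf_and (ufa _ hb)); rewrite -coh //; [exact: imp1 | exact: imp2].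
    move=> g [r1 r2]; split.
      by apply: s1; move: r1; rewrite (restr_char h1) autG_restr.
    by apply: s2; move: r2; rewrite (restr_char h2) autG_restr.
  - move=> A [m [T [C [CC1 [imp s]]]]].
    have [b [hb bC]] := Cne C CC1.
    have [f Tf] := uf_ne (ufa m hb) (imp b hb bC).
    have [g [hg E]] := extend hK f.
    exists (exist _ g hg); apply: s; rewrite /autG /=; by rewrite E.
  - exists (fun _ => True), 0, (fun _ => True), C0; split => //; split => // b hb _.
    exact: (uf_T (ufa 0 hb)).
pose a : Pt K := fun n T => U (fun g => T (autG g n)).
have ha : in_SG a.
  split; first by move=> n; exact: (uf_push _ hU).
  move=> m n hmn T; apply: (uf_ext hU) => g.
  by rewrite (restr_char hmn) autG_restr.
exists a; split => // C CC1.
case: (pselect (C a)) => // na; exfalso.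
have [m [T [aT h]]] := Ccl C CC1 a ha na.
have : U (fun g => ~ T (autG g m)).
  apply: UB; exists m, (fun x => ~ T x), C; split => //; split => // b hb bC.
  by apply/(uf_not (ufa m hb)) => bT; exact: h b hb bT bC.
by move/(uf_not hU).
Qed.

End S1.
Arguments prod {K} a c n _.
Arguments closed_iff {K m} P Q [a] _ _.
Arguments closed_at {K m} P [a] _ _.
Arguments closed_all {K I} C _ [a] _ _.
Arguments closed_and {K C1 C2} _ _ [a] _ _.
Arguments closed_imp {K} Q {C} _ [a] _ _.
Arguments closed_dot {K m} f T Q [a] _ _.
Arguments compH {K m n} x f hb.
Arguments pre {K m} n k T _.

Section Main.
Variable K : Struct.
Variable hK : ultrahomogeneous K.
Variable M : pset (Pt K).
Variable hM : minimal_subflow M.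

Lemma Msg b : M b -> in_SG b. Proof. by case: hM => h _; exact: h. Qed.
Lemma Mcl : closed_SG M. Proof. by case: hM => _ [_ [h _]]. Qed.
Lemma Minv : invariant_SG M. Proof. by case: hM => _ [_ [_ [h _]]]. Qed.

Lemma closed_imp' (Q : Prop) (C : pset (Pt K)) : (Q -> closed_SG C) -> closed_SG (fun b => Q -> C b).
Proof.
move=> hC a ha na.
have [q nC] : Q /\ ~ C a by apply/not_implyP.
have [m [T [aT h]]] := hC q a ha nC.
exists m, T; split => // b hb bT hq; exact: h b hb bT (hq q).
Qed.

Lemma closed_SGall : closed_SG (fun b : Pt K => in_SG b).
Proof. by move=> a ha na. Qed.

Lemma right_ideal b c : M b -> in_SG c -> M (prod b c).
Proof.
move=> Mb hc; have hb := Msg Mb.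
case: (pselect (M (prod b c))) => // nM; exfalso.
have [m [T [bcT h]]] := Mcl (prod_SG hb hc) nM.
have [f hf] := uf_ne (ufa m hc) bcT.
have [g [hg E]] := extend hK f.
apply: (h (act b g) (act_SG hg hb)); last exact: Minv.
by rewrite (act_dot _ hg) E.
Qed.

Lemma image_closed u (Y : pset (Pt K)) : in_SG u -> (forall y, Y y -> in_SG y) -> closed_SG Y ->
  closed_SG (fun d => exists y, Y y /\ d = prod u y).
Proof.
move=> hu YS Ycl d hd nd.
case: (pselect (exists m (T : pset (H K m)), d m T /\ ~ exists y, Y y /\ prod u y m T)).
  move=> [m [T [dT nY]]]; exists m, T; split => // b hb bT [y [Yy E]].
  by apply: nY; exists y; rewrite -E.
move=> nex; exfalso.
have all : forall m (T : pset (H K m)), d m T -> exists y, Y y /\ prod u y m T.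
  move=> m T dT; case: (pselect (exists y, Y y /\ prod u y m T)) => // ny.
  by exfalso; apply: nex; exists m, T.
pose CC := fun C : pset (Pt K) => exists m (T : pset (H K m)), d m T /\
   C = (fun y => Y y /\ y m (fun f : H K m => dot u (sval f) T)).
have [y [hy hall]] : exists y, in_SG y /\ forall C, CC C -> C y.
  apply: (compact hK).
  - move=> C [m [T [_ ->]]]; exact: (closed_and Ycl (closed_at (fun f : H K m => dot u (sval f) T))).
  - move=> C [m [T [dT ->]]]; have [y [Yy yT]] := all m T dT.
    by exists y; split => //; exact: YS.
  - move=> C1 C2 [m1 [T1 [dT1 ->]]] [m2 [T2 [dT2 ->]]].
    have h1 : m1 <= m1 + m2 by exact: leq_addr.
    have h2 : m2 <= m1 + m2 by exact: leq_addl.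
    pose T3 := fun x : H K (m1 + m2) => restr_pre T1 x /\ restr_pre T2 x.
    exists (fun y => Y y /\ y (m1 + m2) (fun f : H K (m1 + m2) => dot u (sval f) T3)); split.
      exists (m1 + m2), T3; split => //.
      by apply: (uf_and (ufa _ hd)); rewrite -coh.
    move=> b hb [Yb bT]; have hub := prod_SG hu hb.
    split; split => //.
      apply/(coh hub h1); apply: (uf_mono (ufa _ hub) bT) => x []; by [].
    apply/(coh hub h2); apply: (uf_mono (ufa _ hub) bT) => x []; by [].
  - by exists (fun y => Y y /\ y 0 (fun f : H K 0 => dot u (sval f) (fun _ => True))), 0, (fun _ => True); split => //; exact: (uf_T (ufa 0 hd)).
have Yy : Y y.
  by have [] := hall (fun y => Y y /\ y 0 (fun f : H K 0 => dot u (sval f) (fun _ => True)))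
     (ex_intro _ 0 (ex_intro _ (fun _ => True) (conj (uf_T (ufa 0 hd)) erefl))).
have sub : forall m T, d m T -> prod u y m T.
  move=> m T dT; by have [] := hall _ (ex_intro _ m (ex_intro _ T (conj dT erefl))).
apply: nd; exists y; split => //; apply: pt_eq => m T; split; first exact: sub.
move=> uyT; case: (pselect (d m T)) => // ndT; exfalso.
have := sub m (fun x => ~ T x) (proj2 (uf_not (ufa m hd) T) ndT).
by move/(uf_not (ufa m (prod_SG hu hy))).
Qed.


Lemma id_aut : is_aut K id.
Proof. split; [by exists id | by []]. Qed.

Lemma actS_char (g : nat -> nat) m (S : pset (H K m)) n (x : H K n) (f : H K m) (hb : forall i, sval f i < n) :
  (forall j, sval x j = g j) -> (actS S g f <-> S (compH x f hb)).
Proof.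
move=> hx; split.
  case=> h [Sh E]; have -> : compH x f hb = h => //.
  by apply: eqH => i /=; rewrite E hx.
move=> Sc; exists (compH x f hb); split => // i /=; exact: hx.
Qed.

Variable m : nat.
Variable S : pset (H K m).
Variable hS : minimal_set S.

Definition pi (b : Pt K) : pset (H K m) := fun f => dot b (sval f) S.
Definition PP (T : pset (H K m)) := exists b, M b /\ T = pi b.

Lemma W_in b n (hb : in_SG b) (F : list (H K m)) : (forall f, List.In f F -> forall i, sval f i < n) ->
  b n (fun x => forall f, List.In f F -> (dot b (sval f) S <-> pre n (sval f) S x)).
Proof.
elim: F => [|f F IH] hF.
  by apply: (uf_mono (ufa n hb) (uf_T (ufa n hb))).
have hf : forall i, sval f i < n by apply: hF; left.
have := IH (fun f' h => hF f' (or_intror h)) => hW.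
have hWf : b n (fun x => dot b (sval f) S <-> pre n (sval f) S x).
  case: (pselect (dot b (sval f) S)) => df.
    have := proj1 (dot_at hb hf S) df => h.
    by apply: (uf_mono (ufa n hb) h) => x px; split.
  have := proj2 (uf_not (ufa n hb) _) (fun h => df (proj2 (dot_at hb hf S) h)) => h.
  by apply: (uf_mono (ufa n hb) h) => x px; split.
apply: (uf_mono (ufa n hb) (uf_and (ufa n hb) hWf hW)) => x [h1 h2] f' [<-|h] //.
exact: h2.
Qed.

Lemma PP_sub T : PP T -> orbit_closure S T.
Proof.
move=> [b [Mb ->]] F; have hb := Msg Mb.
have [n hF] := bound_list F.
have [x Wx] := uf_ne (ufa n hb) (W_in hb hF).
have [g [hg E]] := extend hK x.
exists (actS S g); split; first by exists g.
move=> f Ff; rewrite /pi (Wx f Ff) (pre_char (hF f Ff)).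
symmetry; apply: actS_char => j; by rewrite -E.
Qed.

Lemma pi_act b g (hg : is_aut K g) : in_SG b -> actS (pi b) g = pi (act b g).
Proof.
move=> hb; apply: funext => f; apply: propext.
rewrite /pi (dot_act hg hb); split.
  case=> h [dh E].
  have -> : (fun i => g (sval f i)) = sval h by apply: funext => i; rewrite E.
  exact: dh.
have [N hN] := bound (sval f).
move=> d; exists (compH (autH hg N) f hN); split => //.
Qed.

Lemma PP_inv : invariant2 PP.
Proof.
move=> T g [b [Mb ->]] hg; exists (act b g); split; first exact: Minv.
exact: pi_act (Msg Mb).
Qed.

Lemma PP_closed : closed2 PP.
Proof.
move=> T hT.
pose CC := fun C : pset (Pt K) => exists F : list (H K m),
   C = (fun b => M b /\ forall f, List.In f F -> (dot b (sval f) S <-> T f)).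
have [a [ha hall]] : exists a, in_SG a /\ forall C, CC C -> C a.
  apply: (compact hK).
  - move=> C [F ->]; apply: (closed_and Mcl).
    apply: (closed_all (fun f b => List.In f F -> (dot b (sval f) S <-> T f))) => f.
    exact: (closed_imp _ (closed_dot f S (T f))).
  - move=> C [F ->]; have [U [[b [Mb ->]] hU]] := hT F.
    exists b; split; first exact: Msg.
    split => // f /hU [h1 h2]; split; [exact: h2 | exact: h1].
  - move=> C1 C2 [F1 ->] [F2 ->]; exists (fun b => M b /\ forall f, List.In f (F1 ++ F2) -> (dot b (sval f) S <-> T f)).
    split; first by exists (F1 ++ F2).
    move=> b _ [Mb h]; split; split => // f Ff; apply: h; apply: List.in_or_app; by [left|right].
  - by exists (fun b => M b /\ forall f, List.In f nil -> (dot b (sval f) S <-> T f)), nil.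
have [Ma _] := hall _ (ex_intro _ nil erefl).
exists a; split => //; apply: funext => f; apply: propext.
have [_ h] := hall _ (ex_intro _ [:: f] erefl).
symmetry; apply: h; by left.
Qed.

Lemma S_in_O : orbit_closure S S.
Proof.
move=> F; exists (actS S id); split; first by exists id; split => //; exact: id_aut.
move=> f _; split.
  by move=> Sf; exists f.
by case=> h [Sh E]; have <- : h = f by apply: eqH.
Qed.

Lemma exists_p : exists p, M p /\ forall f : H K m, dot p (sval f) S <-> S f.
Proof.
case: hS => _ [_ [_ Omin]].
have Mne : exists b, M b by case: hM => _ [h _].
have [b Mb] := Mne.
have [p [Mp E]] := Omin PP PP_sub (ex_intro _ (pi b) (ex_intro _ b (conj Mb erefl))) PP_closed PP_inv S S_in_O.
exists p; split => // f; rewrite {2}E; exact: iff_refl.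
Qed.


Definition T0 (q : Pt K) := M q /\ forall f : H K m, dot q (sval f) S <-> S f.

Lemma T0_closed : closed_SG T0.
Proof.
apply: (closed_and Mcl).
apply: (closed_all (fun f b => dot b (sval f) S <-> S f)) => f.
exact: (closed_dot f S (S f)).
Qed.

Lemma T0_sg q q' : T0 q -> T0 q' -> T0 (prod q q').
Proof.
move=> [Mq hq] [Mq' hq']; have sq := Msg Mq; have sq' := Msg Mq'.
split; first exact: right_ideal.
move=> f; rewrite (dot_prod sq sq') -hq'.
apply: (uf_ext (dot_uf sq' f)) => h; exact: hq.
Qed.

Lemma T0_sgp q : T0 q -> in_SG q. Proof. by case=> /Msg. Qed.

Definition good (Z : pset (Pt K)) := (forall z, Z z -> T0 z) /\ (exists z, Z z) /\ closed_SG Z /\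
  (forall z z' : Pt K, Z z -> Z z' -> Z (prod z z')).

Lemma good_eq (Z : pset (Pt K)) : (forall z, Z z -> T0 z) -> (fun x => Z x /\ T0 x) = Z.
Proof. move=> h; apply: funext => x; apply: propext; split; [by case | by move=> Zx; split => //; exact: h]. Qed.

Lemma closed_eqpt (u : Pt K) : in_SG u -> closed_SG (fun z => prod u z = u).
Proof.
move=> hu.
apply: (closed_ext (closed_all (fun (i : {n : nat & pset (H K n)}) z =>
   z (projT1 i) (fun f : H K (projT1 i) => dot u (sval f) (projT2 i)) <-> u (projT1 i) (projT2 i)) _)).
  by move=> [n T]; exact: closed_iff.
move=> b hb; split.
  by move=> h; apply: pt_eq => n T; exact: (h (existT _ n T)).
move=> E [n T] /=; have E' : prod u b n T = u n T by rewrite E.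
rewrite -E'; exact: iff_refl.
Qed.

Lemma ellis : exists u, T0 u /\ prod u u = u.
Proof.
have [p [Mp hp]] := exists_p.
have T0p : T0 p by split.
pose P := fun Z : pset (Pt K) => good (fun x => Z x /\ T0 x).
have [Z [PZ Zmin]] : exists Z, P Z /\ forall Z', P Z' -> (forall x, Z' x -> Z x) -> forall x, Z x -> Z' x.
  apply: zorn_min => F FP tot.
  have Fcl : forall Z, F Z -> closed_SG (fun x => Z x /\ T0 x).
    by move=> Z /FP [_ [_ [h _]]].
  split; first by move=> z [].
  split.
    pose CC := fun C : pset (Pt K) => C = T0 \/ exists Z, F Z /\ C = (fun x => Z x /\ T0 x).
    have [a [ha hall]] : exists a, in_SG a /\ forall C, CC C -> C a.
      apply: (compact hK).
      - by move=> C [->|[Z [FZ ->]]]; [exact: T0_closed | exact: Fcl].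
      - move=> C [->|[Z [FZ ->]]]; first by exists p; split => //; exact: T0_sgp.
        have [_ [[z Zz] _]] := FP Z FZ; exists z; split => //.
        by apply: T0_sgp; case: Zz.
      - move=> C1 C2 [->|[Z1 [F1 ->]]] [->|[Z2 [F2 ->]]].
        + by exists T0; split; [left|].
        + by exists (fun x => Z2 x /\ T0 x); split; [right; exists Z2 | move=> b _ [? ?]].
        + by exists (fun x => Z1 x /\ T0 x); split; [right; exists Z1 | move=> b _ [? ?]].
        + case: (tot _ _ F1 F2) => s.
            by exists (fun x => Z1 x /\ T0 x); split; [right; exists Z1 | move=> b _ [? ?]; split; split => //; exact: s].
          by exists (fun x => Z2 x /\ T0 x); split; [right; exists Z2 | move=> b _ [? ?]; split; split => //; exact: s].
      - by exists T0; left.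
    exists a; split; last by apply: hall; left.
    by move=> Z FZ; have [] := hall _ (or_intror (ex_intro _ Z (conj FZ erefl))).
  split.
    apply: (closed_ext (closed_and (closed_all (fun Z x => F Z -> Z x /\ T0 x) _) T0_closed)).
      by move=> Z; apply: closed_imp' => /Fcl.
    move=> b _; split.
      by move=> [h t]; split => // Z FZ; case: (h Z FZ).
    by move=> [h t]; split => // Z FZ; split => //; exact: h.
  move=> z z' [hz tz] [hz' tz']; split; last exact: T0_sg.
  move=> Z FZ; have [_ [_ [_ sg]]] := FP Z FZ.
  by have [] := sg z z' (conj (hz Z FZ) tz) (conj (hz' Z FZ) tz').
case: PZ => [ZT0 [[u [Zu Tu]] [Zcl Zsg]]].
have su := T0_sgp Tu.
pose Zs := fun x => Z x /\ T0 x.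
pose Y := fun d => exists z, Zs z /\ d = prod u z.
have YZs : forall d, Y d -> Zs d by move=> d [z [zz ->]]; exact: Zsg.
have PY : P Y.
  rewrite /P good_eq; last by move=> d /YZs [].
  split; first by move=> d /YZs [].
  split; first by exists (prod u u), u.
  split.
    apply: (image_closed su); last exact: Zcl.
    by move=> y [_ /T0_sgp].
  move=> d d' [z [zz ->]] [z' [zz' ->]].
  have sz := T0_sgp (proj2 zz); have sz' := T0_sgp (proj2 zz').
  exists (prod z (prod u z')); split; first by apply: (Zsg) => //; exact: (Zsg).
  rewrite prod_assoc //; exact: prod_SG.
have [z [zz uz]] : Y u by apply: (Zmin Y PY) => // d /YZs [].
pose W := fun z => Zs z /\ prod u z = u.
have PW : P W.
  rewrite /P good_eq; last by move=> d [[]].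
  split; first by move=> d [[]].
  split; first by exists z.
  split; first exact: (closed_and Zcl (closed_eqpt su)).
  move=> a b [za ea] [zb eb]; split; first exact: Zsg.
  have sa := T0_sgp (proj2 za); have sb := T0_sgp (proj2 zb).
  by rewrite -prod_assoc // ea.
have [_ uu] : W u by apply: (Zmin W PW) => // d [[]].
by exists u.
Qed.


Lemma main_sec (a c : Pt K) : in_SG a -> in_SG c ->
  (forall phi : Pt K -> Pt K, retraction M phi -> phi a = phi c) -> (a m S <-> c m S).
Proof.
move=> ha hc hphi.
have [u [[Mu hu] uu]] := ellis.
have su := Msg Mu.
have keyS : forall b : Pt K, in_SG b -> (prod u b m S <-> b m S).
  by move=> b hb; apply: (uf_ext (ufa m hb)) => f; exact: hu.
have ret : retraction M (prod u).
  split; first by move=> b hb; exact: right_ideal.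
  split.
    move=> b hb n T h; exists n, (fun f : H K n => dot u (sval f) T); split => //.
  split; first by move=> b g hb hg; rewrite prod_act.
  move=> g Mg.
  pose N := fun d => exists dl, in_SG dl /\ d = prod u dl.
  have : N g.
    case: hM => _ [_ [_ [_ Mmin]]].
    apply: (Mmin N) => //.
    - by move=> d [dl [hdl ->]]; exact: right_ideal.
    - by exists (prod u u), u.
    - apply: (image_closed su) => //; exact: closed_SGall.
    - move=> d g' [dl [hdl ->]] hg'; exists (act dl g'); split; first exact: act_SG.
      exact: prod_act.
  move=> [dl [hdl ->]].
  by rewrite -prod_assoc // uu.
have E := hphi _ ret.
rewrite -(keyS a ha) -(keyS c hc) E; exact: iff_refl.
Qed.

End Main.

Unset Implicit Arguments.

Theorem mainTheorem16 (K : Struct) (hK : ultrahomogeneous K)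
  (M : pset (Pt K)) (hM : minimal_subflow M)
  (a c : Pt K) (ha : in_SG a) (hc : in_SG c)
  (hphi : forall phi : Pt K -> Pt K, retraction M phi -> phi a = phi c)
  (m : nat) (S : pset (H K m)) (hS : minimal_set S) :
  a m S <-> c m S.
Proof. exact: (main_sec hK hM hS ha hc hphi). Qed.
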